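(* Let $H,U$ be Hilbert spaces, $1<q<\infty$, and let $m:\mathcal{F}\to L(H,U)$ be a countably additive vector measure with finite $q$-variation $\overline{m}_q^{\mathbb{P}}(\Omega)<\infty$. Let $A\in\mathcal{F}$ with $\mathbb{P}(A)>0$ be such that $m(A_1)u=m(A_2)u$ for all $u\in H$ and all $A_1,A_2\in\mathcal{F}$ with $A_1,A_2\subset A$ and $\mathbb{P}(A_1)=\mathbb{P}(A_2)$. Then $$\mathbb{P}(B\mid A)\,m(A)=m(A\cap B)\quad\text{for all }B\in\mathcal{F},$$ where $\mathbb{P}(B\mid A)=\mathbb{P}(A\cap B)/\mathbb{P}(A)$.
   Context: $(\Omega,\mathcal{F},\mathbb{P})$ is a complete atomless probability space with $\Omega$ Polish and $\mathcal{F}$ its Borel $\sigma$-field. With $\frac1p+\frac1q=1$, the $q$-variation of $m$ is $\overline{m}_q^{\mathbb{P}}(\Omega):=\sup\{\sum_{i=1}^n\|m(A_i)x_i\|_U:\ Y=\sum_{i=1}^n\mathbf{1}_{A_i}x_i,\ A_i\in\mathcal{F}\text{ pairwise disjoint},\ x_i\in H,\ \mathbb{E}\|Y\|_H^p\le1\}$. *)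

(* Defs.v *)
From HB Require Import structures.
From mathcomp Require Import all_boot all_order all_algebra.
From mathcomp Require Import all_classical all_reals all_analysis.
Set Implicit Arguments. Unset Strict Implicit. Unset Printing Implicit Defensive.
Import Order.TTheory GRing.Theory Num.Theory.
Import numFieldNormedType.Exports.
Local Open Scope classical_set_scope.
Local Open Scope ring_scope.

Definition is_hilbert_inner {R : realType} {H : completeNormedModType R}
  (ip : H -> H -> R) : Prop :=
  [/\ forall (a : R) (x y z : H), ip (a *: x + y) z = a * ip x z + ip y z,
      forall x y : H, ip x y = ip y x &
      forall x : H, ip x x = `|x| ^+ 2].

Definition hilbert_space {R : realType} (H : completeNormedModType R) : Prop :=
  exists ip : H -> H -> R, is_hilbert_inner ip.

Definition bounded_linear {R : realType} {H U : normedModType R}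
  (T : H -> U) : Prop :=
  (forall (a : R) (x y : H), T (a *: x + y) = a *: T x + T y) /\
  exists C : R, forall x : H, `|T x| <= C * `|x|.

Definition atomless {d} {T : measurableType d} {R : realType}
  (P : probability T R) : Prop :=
  forall A : set T, measurable A -> (0 < P A)%E ->
    exists B : set T, [/\ measurable B, B `<=` A, (0 < P B)%E & (P B < P A)%E].

Definition polish_metric {R : realType} {T : Type} (dist : T -> T -> R) : Prop :=
  [/\ (forall x y, 0 <= dist x y) /\ (forall x y, dist x y = 0 <-> x = y),
      (forall x y, dist x y = dist y x),
      (forall x y z, dist x z <= dist x y + dist y z),
      (forall u : nat -> T,
         (forall e : R, 0 < e -> exists N, forall m n, (N <= m)%N -> (N <= n)%N ->
             dist (u m) (u n) < e) ->
         exists l : T, forall e : R, 0 < e -> exists N, forall n, (N <= n)%N -> dist (u n) l < e) &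
      (exists s : nat -> T, forall x (e : R), 0 < e -> exists n, dist x (s n) < e)].

Definition metric_open {R : realType} {T : Type} (dist : T -> T -> R) (O : set T) : Prop :=
  forall x, O x -> exists e : R, 0 < e /\ forall y, dist x y < e -> O y.

Definition metric_borel {R : realType} {T : Type} (dist : T -> T -> R) : set (set T) :=
  <<s metric_open dist >>.

(* Standing assumption: the measurable sets of T are the P-completion of the Borel
   sigma-field of a Polish topology on T, and (T, F, P) is complete and atomless. *)
Definition polish_setting {d} {T : measurableType d} {R : realType}
  (P : probability T R) : Prop :=
  [/\ (exists dist : T -> T -> R, polish_metric dist /\
        (forall B, metric_borel dist B -> measurable B) /\
        (forall A : set T, measurable A <->
           exists B N, [/\ metric_borel dist B, metric_borel dist N, P N = 0%E &
                          (A `\` B) `|` (B `\` A) `<=` N])),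
      measure_is_complete P &
      atomless P].

(* countable additivity in the operator norm of L(H,U) *)
Definition op_countably_additive {d} {T : measurableType d} {R : realType}
  {H U : normedModType R} (m : set T -> H -> U) : Prop :=
  forall F : nat -> set T, (forall n, measurable (F n)) -> trivIset setT F ->
    forall e : R, 0 < e ->
      \forall n \near \oo, forall u : H,
        `|m (\bigcup_k F k) u - \sum_(k < n) m (F k) u| <= e * `|u|.

Definition simple_fun {T : Type} {R : realType} {H : normedModType R} (n : nat)
  (A : 'I_n -> set T) (x : 'I_n -> H) (w : T) : H :=
  \sum_(i < n) (\1_(A i) w : R) *: x i.

(* finite q-variation, 1/p + 1/q = 1 *)
Definition finite_q_variation {d} {T : measurableType d} {R : realType}
  {H U : normedModType R} (P : probability T R) (q : R) (m : set T -> H -> U) : Prop :=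
  let p := q / (q - 1) in
  exists M : R, forall (n : nat) (A : 'I_n -> set T) (x : 'I_n -> H),
    (forall i, measurable (A i)) ->
    (forall i j, i != j -> A i `&` A j = set0) ->
    (\int[P]_w ((`|simple_fun A x w| `^ p)%:E) <= 1)%E ->
    \sum_(i < n) `|m (A i) (x i)| <= M.

(* Main.v *)
From HB Require Import structures.
From mathcomp Require Import all_boot all_order all_algebra.
From mathcomp Require Import all_classical all_reals all_analysis.
From mathcomp Require Import ring lra.
Require Import Defs.
Import Order.TTheory GRing.Theory Num.Theory.
Import numFieldNormedType.Exports.
Local Open Scope classical_set_scope.
Local Open Scope ring_scope.

Set Implicit Arguments. Unset Strict Implicit.
Section Sierp.
Variables (R : realType) (d : measure_display) (T : measurableType d) (P : probability T R).
Local Notation mu E := (fine (P E)).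

Lemma PE (E : set T) : measurable E -> P E = (mu E)%:E.
Proof. by move=> mE; rewrite fineK //; exact: fin_num_measure. Qed.

Lemma mu_ge0 (E : set T) : 0 <= mu E.
Proof. exact: fine_ge0. Qed.

Lemma mu_le1 (E : set T) : measurable E -> mu E <= 1.
Proof. by move=> mE; have := probability_le1 P mE; rewrite PE // lee_fin. Qed.

Lemma mu0 : mu set0 = 0.
Proof. by rewrite measure0. Qed.

Lemma muU (E F : set T) : measurable E -> measurable F -> E `&` F = set0 ->
  mu (E `|` F) = mu E + mu F.
Proof.
move=> mE mF dEF; rewrite measureU // fineD //; exact: fin_num_measure.
Qed.

Lemma muD (E F : set T) : measurable E -> measurable F -> F `<=` E ->
  mu (E `\` F) = mu E - mu F.
Proof.
move=> mE mF FE; have -> : mu E = mu (F `|` (E `\` F)) by rewrite setDUK.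
rewrite muU //; first by rewrite [mu F + _]addrC addrK.
  exact: measurableD.
by rewrite setDE setICA setICr setI0.
Qed.

Lemma mu_le (E F : set T) : measurable E -> measurable F -> E `<=` F -> mu E <= mu F.
Proof.
move=> mE mF EF; rewrite -lee_fin -!PE //; by apply: le_measure => //; rewrite inE.
Qed.


Lemma halve (hA : atomless P) n E : measurable E -> 0 < mu E ->
  exists F, [/\ measurable F, F `<=` E, 0 < mu F & mu F * 2 ^+ n <= mu E].
Proof.
move=> mE E0; elim: n => [|n [F [mF FE F0 Fn]]].
  by exists E; split => //; rewrite expr0 mulr1.
have [G [mG GF G0 GlF]] : exists G, [/\ measurable G, G `<=` F, 0 < mu G & mu G < mu F].
  have := hA F mF; rewrite (PE mF) lte_fin => /(_ F0) [G [mG GF]].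
  by rewrite (PE mG) (PE mF) !lte_fin => G0 GlF; exists G.
have x0 : 0 <= (2:R) ^+ n by rewrite exprn_ge0.
case: (leP (mu G * 2) (mu F)) => h.
  exists G; split => //; first by move=> x /GF /FE.
  rewrite exprS mulrA; apply: le_trans Fn; exact: ler_wpM2r.
exists (F `\` G); split.
- exact: measurableD.
- by move=> x [/FE].
- by rewrite muD // subr_gt0.
- rewrite exprS mulrA; apply: le_trans Fn; apply: ler_wpM2r => //.
  rewrite muD //; lra.
Qed.

Lemma small (hA : atomless P) E (eps : R) : measurable E -> 0 < mu E -> 0 < eps ->
  exists F, [/\ measurable F, F `<=` E, 0 < mu F & mu F <= eps].
Proof.
move=> mE E0 e0.
have ie : 0 <= eps^-1 by rewrite invr_ge0 ltW.
have hb := @archi_boundP R (eps^-1) ie.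
set N := Num.Def.archi_bound _ in hb.
have [F [mF FE F0 Fn]] := halve hA N mE E0.
exists F; split => //.
have h2 : (N%:R : R) <= 2 ^+ N.
  by rewrite -natrX ler_nat ltnW // ltn_expl.
have h1 : mu F * N%:R <= 1.
  apply: le_trans (mu_le1 mE); apply: le_trans Fn; apply: ler_wpM2l => //; exact: mu_ge0.
have h3 : 1 < eps * N%:R.
  have : eps * eps^-1 < eps * N%:R by rewrite (ltr_pM2l e0).
  by rewrite mulfV // gt_eqF.
have N0 : 0 < (N%:R : R) by apply: lt_trans hb; rewrite invr_gt0.
apply/ltW; rewrite -(ltr_pM2r N0); exact: le_lt_trans h1 h3.
Qed.

Lemma step_ex E (t : R) C : measurable E -> exists D,
  (measurable C /\ C `<=` E /\ mu C <= t) ->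
  [/\ measurable D, D `<=` E `\` C, mu D <= t - mu C &
     forall G, measurable G -> G `<=` E `\` C -> mu G <= t - mu C -> mu G <= 2 * mu D].
Proof.
move=> mE.
case: (pselect (measurable C /\ C `<=` E /\ mu C <= t)) => [[mC [CE Ct]]|nh];
  last by exists set0 => /nh.
pose S := [set x | exists G, [/\ measurable G, G `<=` E `\` C, mu G <= t - mu C & x = mu G]].
have tC : 0 <= t - mu C by rewrite subr_ge0.
have S0 : S 0 by exists set0; rewrite mu0; split => //; exact: sub0set.
have hs : has_sup S.
  by split; [exists 0 | exists 1 => x [G [mG _ _ ->]]; exact: mu_le1].
have sub : forall G, measurable G -> G `<=` E `\` C -> mu G <= t - mu C -> mu G <= sup S.
  by move=> G mG GE Gt; apply: sup_upper_bound hs _ _; exists G.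
case: (ltP 0 (sup S)) => hsup.
  have [x [G [mG GE Gt ->]] hx] := sup_adherent (divr_gt0 hsup (ltr0Sn R 1)) hs.
  exists G => _; split => // G' mG' G'E G't.
  have := sub G' mG' G'E G't; lra.
exists set0 => _; split; [exact: measurable0 | exact: sub0set | by rewrite mu0 | ].
move=> G' mG' G'E G't; have := sub G' mG' G'E G't; rewrite mu0; lra.
Qed.

Lemma sierp (hA : atomless P) E (t : R) : measurable E -> 0 <= t -> t <= mu E ->
  exists F, [/\ measurable F, F `<=` E & mu F = t].
Proof.
move=> mE t0 tE.
have [f hf] := choice (fun C => step_ex t C mE).
pose C n := iter n (fun X => X `|` f X) set0.
have inv : forall n, [/\ measurable (C n), C n `<=` E & mu (C n) <= t].
  elim => [|n [mC CE Ct]] /=; first by split => //; rewrite mu0.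
  have [mD DE Dt Dmax] := hf (C n) (conj mC (conj CE Ct)).
  split; first exact: measurableU.
    by move=> x [/CE|/DE []].
  rewrite muU //; first lra.
  by apply/seteqP; split => // x [Cx /DE [_ []]].
have Cinc : forall n, C n `<=` C n.+1 by move=> n x Cx; left.
pose U := \bigcup_n C n.
have mU : measurable U by apply: bigcupT_measurable => n; case: (inv n).
have UE : U `<=` E by move=> x [n _]; case: (inv n) => _ + _; apply.
have CU : forall n, C n `<=` U by move=> n x Cx; exists n.
have Ut : mu U <= t.
  have cv := nondecreasing_cvg_mu (mu:=P) (fun n => let: And3 h _ _ := inv n in h) mU
    ((nondecreasing_seqP _).1 (fun n => introT (subsetPset _ _) (Cinc n))).
  have : (P U <= t%:E)%E.
    rewrite -(cvg_lim _ cv) //; apply: lime_le; first by apply/cvg_ex; exists (P U).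
    by near=> n; case: (inv n) => mC _ Ct /=; rewrite (PE mC) lee_fin.
  by rewrite (PE mU) lee_fin.
case: (leP t (mu U)) => hU.
  by exists U; split => //; apply/le_anti/andP.
have mEU : 0 < mu (E `\` U) by rewrite muD //; lra.
have [G [mG GEU G0 Gsmall]] : exists G, [/\ measurable G, G `<=` E `\` U, 0 < mu G & mu G <= t - mu U].
  by apply: (small hA (measurableD mE mU) mEU); rewrite subr_gt0.
have key : forall n, n%:R * (mu G / 2) <= mu (C n).
  elim => [|n IH]; first by rewrite mul0r mu_ge0.
  have [mC CE Ct] := inv n.
  have [mD DE Dt Dmax] := hf (C n) (conj mC (conj CE Ct)).
  have hG : mu G <= 2 * mu (f (C n)).
    apply: Dmax => //.
      by move=> x /GEU [Ex nUx]; split => // /(CU n).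
    by have := mu_le mC mU (CU n); lra.
  rewrite /= muU //; last first.
    by apply/seteqP; split => // x [Cx /DE [_ []]].
  rewrite -[n.+1]addn1 natrD mulrDl mul1r -/(C n); lra.
have hb := @archi_boundP R (2 / mu G) (ltW (divr_gt0 (ltr0Sn R 1) G0)).
set N := Num.Def.archi_bound _ in hb.
move: hb; rewrite ltr_pdivrMr // => hb.
have := key N; have [mC _ _] := inv N; have := mu_le1 mC.
rewrite mulrA; lra.
Unshelve. all: by end_near.
Qed.

End Sierp.



Lemma zero_small (R : realType) (V : normedModType R) (w : V) c : 0 <= c ->
  (forall e, 0 < e -> `|w| <= e * c) -> w = 0.
Proof.
move=> c0 h; apply/normr0_eq0/eqP; rewrite eq_le normr_ge0 andbT.
rewrite leNgt; apply/negP => w0.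
have := h (`|w| / (c + 1)) (divr_gt0 w0 (ltr_wpDl c0 ltr01)).
rewrite mulrAC ler_pdivlMr ?(ltr_wpDl c0 ltr01) // mulrDr mulr1; lra.
Qed.

Lemma m_empty (R : realType) d (T : measurableType d) (H U : normedModType R)
  (m : set T -> H -> U) : op_countably_additive m -> forall u, m set0 u = 0.
Proof.
move=> hca u; apply: (@zero_small _ _ _ (2 * `|u|)); first by rewrite mulr_ge0.
move=> e e0.
have tr : trivIset [set: nat] (fun _ : nat => set0 : set T).
  rewrite /trivIset => i j _ _ [x [Fx _]]; exfalso; exact: Fx.
have [N _ HN] := hca (fun=> set0) (fun=> measurable0) tr e e0.
have h1 := HN N (leqnn N) u; have h2 := HN N.+1 (leqnSn N) u.
rewrite bigcup0 // !sumr_const !card_ord in h1 h2.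
set v := m set0 u in h1 h2 *.
have -> : v = (v - v *+ N) - (v - v *+ N.+1).
  rewrite mulrS; set w := v *+ N.
  have -> : v - (v + w) = - w by rewrite opprD addrA subrr add0r.
  by rewrite opprK subrK.
apply: le_trans (ler_normB _ _) _; lra.
Qed.

Lemma m_add (R : realType) d (T : measurableType d) (H U : normedModType R)
  (m : set T -> H -> U) : op_countably_additive m ->
  forall E F, measurable E -> measurable F -> E `&` F = set0 ->
  forall u, m (E `|` F) u = m E u + m F u.
Proof.
move=> hca E F mE mF dEF u.
apply/eqP; rewrite -subr_eq0; apply/eqP.
apply: (@zero_small _ _ _ `|u|) => // e e0.
have mB : forall n, measurable (bigcup2 E F n) by move=> [|[|n]] /=.
have tr : trivIset setT (bigcup2 E F) by rewrite -trivIset_bigcup2.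
have [N _ HN] := hca _ mB tr e e0.
have := HN N.+2 (leqW (leqnSn N)) u.
rewrite bigcup2E !big_ord_recl /= big1 ?addr0 //.
move=> i _; exact: m_empty.
Qed.

Lemma lin0 (R : realType) (H U : normedModType R) (f : H -> U) :
  bounded_linear f -> f 0 = 0 /\ forall a x, f (a *: x) = a *: f x.
Proof.
move=> [hl _].
have f0 : f 0 = 0.
  have := hl 1 0 0; rewrite !scale1r addr0 => /(congr1 (fun z => z - f 0)) /=.
  by rewrite subrr addrK => ->.
split => // a x; by rewrite -[a *: x]addr0 hl f0 addr0.
Qed.

Lemma m_bound (R : realType) d (T : measurableType d) (P : probability T R)
  (H U : normedModType R) (q : R) (m : set T -> H -> U) :
  1 < q -> (forall E, measurable E -> bounded_linear (m E)) ->
  finite_q_variation P q m ->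
  exists M : R, forall E, measurable E -> forall u, `|m E u| <= M * `|u|.
Proof.
move=> q1 hlin [M hM]; exists M => E mE u.
have [m0 mZ] := lin0 (hlin E mE).
case: (eqVneq u 0) => [->|u0]; first by rewrite m0 !normr0 mulr0.
set x := `|u|^-1 *: u.
have nx : `|x| = 1.
  by rewrite normrZ ger0_norm ?invr_ge0 ?normr_ge0 // mulVf // normr_eq0.
have p0 : q / (q - 1) != 0.
  by rewrite gt_eqF // divr_gt0 // ?subr_gt0; lra.
have hx : `|m E x| <= M.
  have := hM 1%N (fun=> E) (fun=> x) (fun=> mE).
  rewrite big_ord1; apply.
    by move=> i j; rewrite (ord1 i) (ord1 j) eqxx.
  have -> : (fun w => ((`|simple_fun (n:=1) (fun=> E) (fun=> x) w| `^ (q / (q - 1)))%:E))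
      = (fun w => (\1_E w)%:E).
    apply/funext => w; rewrite /simple_fun big_ord1 normrZ nx mulr1 indicE.
    by case: (w \in E) => /=; rewrite ?normr1 ?normr0 ?powR1 ?powR0.
  by rewrite integral_indic // setIT; exact: probability_le1.
have ux : `|u| *: x = u by rewrite /x scalerA mulfV ?scale1r // normr_eq0.
rewrite -{1}ux mZ normrZ normr_id mulrC; apply: ler_wpM2r => //.
Qed.

Lemma rearr (V : zmodType) (a b c : V) : a + b - c = b - (c - a).
Proof. by rewrite opprB addrCA addrA. Qed.

Lemma zero_nat (R : realType) (V : normedModType R) (w : V) K : 0 <= K ->
  (forall N : nat, `|w| <= K / N.+1%:R) -> w = 0.
Proof.
move=> K0 h; apply: (zero_small K0) => e e0.
have ie : 0 <= e^-1 by rewrite invr_ge0 ltW.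
have hb := @archi_boundP R (e^-1) ie.
set N := Num.Def.archi_bound _ in hb.
apply: (le_trans (h N)); rewrite mulrC ler_wpM2r //.
have N1 : 0 < (N.+1%:R : R) by rewrite ltr0Sn.
rewrite -[X in X <= _]mul1r ler_pdivrMr //.
have : e * e^-1 <= e * N.+1%:R.
  have hN : (N%:R : R) <= N.+1%:R by rewrite ler_nat.
  rewrite (ler_pM2l e0); lra.
by rewrite mulfV // gt_eqF.
Qed.

Unset Implicit Arguments.
Set Strict Implicit.

Theorem lemma3p1 (R : realType) (d : measure_display) (Omega : measurableType d)
  (P : probability Omega R) (H U : completeNormedModType R)
  (q : R) (m : set Omega -> H -> U) (A : set Omega) :
  polish_setting P ->
  hilbert_space H -> hilbert_space U ->
  1 < q ->
  (forall E, measurable E -> bounded_linear (m E)) ->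
  op_countably_additive m ->
  finite_q_variation P q m ->
  measurable A -> (0 < P A)%E ->
  (forall A1 A2 : set Omega, measurable A1 -> measurable A2 ->
     A1 `<=` A -> A2 `<=` A -> P A1 = P A2 ->
     forall u : H, m A1 u = m A2 u) ->
  forall B : set Omega, measurable B ->
    forall u : H, (fine (P (A `&` B)) / fine (P A)) *: m A u = m (A `&` B) u.
Proof.
move=> [_ _ hA] _ _ q1 hlin hca hqv mA PA0 hyp B mB u.
have [M hM] := m_bound q1 hlin hqv.
have a0 : 0 < fine (P A) by rewrite -lte_fin -(PE P mA).
set a := fine (P A) in a0 *.
have hyp' : forall E1 E2, measurable E1 -> measurable E2 -> E1 `<=` A -> E2 `<=` A ->
    fine (P E1) = fine (P E2) -> m E1 u = m E2 u.
  by move=> E1 E2 mE1 mE2 E1A E2A e; apply: hyp => //; rewrite (PE P mE1) (PE P mE2) e.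
have mult : forall (c : R) V, measurable V -> V `<=` A -> fine (P V) = c ->
    forall k : nat, k%:R * c <= a -> forall E, measurable E -> E `<=` A ->
    fine (P E) = k%:R * c -> m E u = k%:R *: m V u.
  move=> c V mV VA Vc; elim => [|k IH] hk E mE EA Ek.
    rewrite scale0r; rewrite mul0r in Ek.
    rewrite (hyp' E set0 mE measurable0 EA (sub0set _)); [exact: m_empty | by rewrite mu0 Ek].
  have c0 : 0 <= c by rewrite -Vc mu_ge0.
  have hk' : k%:R * c <= a.
    by apply: le_trans hk; apply: (ler_wpM2r c0); rewrite ler_nat.
  have kE : k%:R * c <= fine (P E) by rewrite Ek; apply: (ler_wpM2r c0); rewrite ler_nat.
  have [F [mF FE Fk]] := sierp hA mE (mulr_ge0 (ler0n _ k) c0) kE.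
  have FA : F `<=` A by move=> x /FE /EA.
  have eq1 := IH hk' F mF FA Fk.
  have eq2 : m (E `\` F) u = m V u.
    apply: hyp' => //; first exact: measurableD.
      by move=> x [/EA].
    by rewrite muD // Ek Fk Vc -[k.+1]addn1 natrD mulrDl mul1r addrAC subrr add0r.
  rewrite -(setDUK FE) (m_add hca mF (measurableD mE mF) _ u); last first.
    by apply/seteqP; split => // x [Fx [_]].
  by rewrite eq1 eq2 -[k.+1]addn1 natrD scalerDl scale1r.
have mAB : measurable (A `&` B) by exact: measurableI.
have ABA : A `&` B `<=` A by move=> x [].
set t := fine (P (A `&` B)).
have t0 : 0 <= t by exact: mu_ge0.
have ta : t <= a by exact: mu_le.
apply/eqP; rewrite eq_sym -subr_eq0; apply/eqP.
apply: (@zero_nat _ _ _ (`|m A u| + M * `|u|)).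
  have := hM A mA u; have := normr_ge0 (m A u); have := normr_ge0 (m A u); lra.
move=> N.
have N1 : 0 < (N.+1%:R : R) by rewrite ltr0Sn.
have n11 : 1 <= (N.+1%:R : R) by rewrite ler1n.
set n1 := (N.+1%:R : R) in N1 n11 *.
pose c := a / n1.
have c0 : 0 < c by rewrite divr_gt0.
have nc : n1 * c = a by rewrite /c mulrC mulfVK // gt_eqF.
have ca : c <= a.
  by rewrite -nc ler_peMl // ltW.
have [V [mV VA Vc]] := sierp hA mA (ltW c0) ca.
have gA : m A u = n1 *: m V u.
  by apply: (mult c V mV VA Vc N.+1) => //; rewrite ?nc.
have tc0 : 0 <= t / c by rewrite divr_ge0 // ltW.
have /andP [tk1 tk2] := truncn_itv tc0.
set k := Num.Def.trunc (t / c) in tk1 tk2.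
have kct : k%:R * c <= t by rewrite -ler_pdivlMr.
have [F [mF FAB Fk]] := sierp hA mAB (mulr_ge0 (ler0n _ k) (ltW c0)) kct.
have FA : F `<=` A by move=> x /FAB /ABA.
have gF : m F u = k%:R *: m V u.
  by apply: (mult c V mV VA Vc k) => //; apply: le_trans kct ta.
pose S := (A `&` B) `\` F.
have mS : measurable S by exact: measurableD.
have SA : S `<=` A by move=> x [/ABA].
have Ss : fine (P S) = t - k%:R * c by rewrite muD // Fk.
set s := t - k%:R * c in Ss.
have s0 : 0 <= s by rewrite subr_ge0.
have sc : s < c.
  have : t < k.+1%:R * c by rewrite -ltr_pdivrMr.
  rewrite /s -[k.+1]addn1 natrD mulrDl mul1r; lra.
have n1s : n1 * s <= a by rewrite -nc ler_pM2l // ltW.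
have [W [mW WA Ws]] := sierp hA mA (mulr_ge0 (ltW N1) s0) n1s.
have gW : m W u = n1 *: m S u.
  by apply: (mult s S mS SA Ss N.+1) => //; rewrite mulrC ?Ws // mulrC.
have gAB : m (A `&` B) u = m F u + m S u.
  rewrite -{1}(setDUK FAB) (m_add hca mF mS _ u) //.
  by apply/seteqP; split => // x [Fx [_]].
set v := m V u in gA gF.
have gS : m S u = n1^-1 *: m W u by rewrite gW scalerA mulVf ?scale1r // gt_eqF.
have ta_eq : t / a * n1 = t / c by rewrite /c invfM invrK mulrA.
have ex : m (A `&` B) u - t / a *: m A u = n1^-1 *: m W u - (t / c - k%:R) *: v.
  by rewrite gAB gF gS gA scalerA ta_eq scalerBl rearr.
rewrite ex.
set r := t / c - k%:R.
have r0 : 0 <= r by rewrite subr_ge0.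
have r1 : r <= 1 by rewrite /r; apply/ltW; rewrite ltrBlDl -[k.+1]addn1 natrD addrC in tk2 *.
have hv : `|v| = `|m A u| / n1 by rewrite gA normrZ (ger0_norm (ltW N1)) mulrC mulKf // gt_eqF.
have hW := hM W mW u.
apply: le_trans (ler_normB _ _) _.
have iN : 0 <= n1^-1 by rewrite invr_ge0 ltW.
rewrite !normrZ (ger0_norm r0) (ger0_norm iN) hv.
have h1 : n1^-1 * `|m W u| <= n1^-1 * (M * `|u|).
  by apply: ler_wpM2l => //; rewrite invr_ge0 ltW.
have h2 : r * (`|m A u| / n1) <= `|m A u| / n1.
  by apply: ler_piMl => //; rewrite divr_ge0 // ltW.
have -> : (`|m A u| + M * `|u|) / n1 = n1^-1 * (M * `|u|) + `|m A u| / n1.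
  by rewrite mulrDl addrC [(M * _) / _]mulrC.
exact: lerD h1 h2.
Qed.
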